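(* Let $\mathcal R_1$ be a collection of $\theta_1$ independent random RDR sets, let $S^*$ be the size-$k$ set returned by the greedy algorithm for weighted maximum coverage on $\mathcal R_1$, and let $\Lambda_1(S^* )=\frac{\hat{INF}_F}{n}\mathcal W_{\mathcal R_1}(S^* )$. Let $S^o$ be a size-$k$ set maximizing $\sigma$. For any $\delta\in(0,1)$, with $a=\ln(1/\delta)$, $$\Pr\Big[\sigma(S^o)\ \le\ \Big(\sqrt{\tfrac{\Lambda_1(S^* )}{1-1/e}+a}+\sqrt a\Big)^2\frac{n}{\theta_1(1-\epsilon')}\Big]\ \ge\ 1-\delta .$$
   Context: Setting: $G=(V,E)$ is a directed graph with $n=|V|$ nodes. A misinformation campaign $F$ spreads in $G$ under the paper's competitive propagation model (TCIC); $INF_F$ is the expected number of nodes reached by $F$. $\sigma(\cdot)$ denotes either of the two submodular set functions (lower bound $\underline\mu$ or upper bound $\overline\mu$ of the expected misinformation-mitigation function). $\hat{INF}_F$ is an $(\epsilon',\delta')$-approximation of $INF_F$, and $\Gamma=\hat{INF}_F/INF_F$; throughout, $\hat{INF}_F$ is treated as fixed with $1-\epsilon'\le\Gamma\le1+\epsilon'$, and $\hat{INF}_F\le n$. Each random RDR set (generated by importance sampling) carries a weight; $\mathcal W_{\mathcal R}(S)$ is the total weight of RDR sets in $\mathcal R$ covered by $S$, and $\frac{\hat{INF}_F}{n}\mathcal W_{\mathcal R}(S)=\sum_i\hat Z_i(S)$ where $\hat Z_i(S)$ is the estimator of the $i$-th set, with $\mathbb E[\hat Z_i(S)]=\Gamma\sigma(S)/n$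 and, for $p=\mathbb E[\hat Z_i(S)]$, $\lambda>0$: $\Pr[\sum_{i\le\theta}\hat Z_i(S)-\theta p\le-\lambda]\le\exp(-\lambda^2/(4\theta p\hat{INF}_F/n))$. The greedy algorithm picks $k$ nodes greedily maximizing total covered weight, and guarantees $\Lambda_1(S^* )\ge(1-1/e)\Lambda_1(S^o)$. *)

(* Defs.v *)
From HB Require Import structures.
From mathcomp Require Import all_boot all_order all_algebra.
From mathcomp Require Import reals sequences exp.
Set Implicit Arguments. Unset Strict Implicit. Unset Printing Implicit Defensive.
Import Order.TTheory GRing.Theory Num.Theory.
Local Open Scope ring_scope.

Definition is_prob {R : realType} {Om : finType} (P : Om -> R) :=
  (forall w, 0 <= P w) /\ \sum_(w : Om) P w = 1.

Definition Pr {R : realType} {Om : finType} (P : Om -> R) (E : pred Om) : R :=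
  \sum_(w : Om | E w) P w.

Definition Expect {R : realType} {Om : finType} (P : Om -> R) (X : Om -> R) : R :=
  \sum_(w : Om) P w * X w.

(* An RDR set: a set of nodes together with its (importance-sampling) weight. *)
Definition rdr (R : realType) (V : finType) := ({set V} * R)%type.

Definition mutually_independent {R : realType} {Om : finType} {V : finType}
    (P : Om -> R) (th : nat) (X : 'I_th -> Om -> rdr R V) :=
  forall A : 'I_th -> pred (rdr R V),
    Pr P (fun w => [forall i, A i (X i w)]) = \prod_(i < th) Pr P (fun w => A i (X i w)).

Definition covW {R : realType} {V : finType} {th : nat}
    (C : 'I_th -> rdr R V) (S : {set V}) : R :=
  \sum_(i < th) (if S :&: (C i).1 != set0 then (C i).2 else 0).

Fixpoint greedy {R : realType} {V : finType} (f : {set V} -> R) (k : nat) : {set V} :=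
  match k with
  | 0 => set0
  | k'.+1 =>
      let S := greedy f k' in
      match [pick v | v \notin S] with
      | None => S
      | Some v0 => Order.arg_max v0 (fun v => v \notin S) (fun v => f (v |: S)) |: S
      end
  end.

(* Main.v *)
Require Import Defs.
From HB Require Import structures.
From mathcomp Require Import all_boot all_order all_algebra.
From mathcomp Require Import reals sequences exp.
From mathcomp Require Import lra.
Import Order.TTheory GRing.Theory Num.Theory.
Local Open Scope ring_scope.

Lemma Pr_compl (R : realType) (Om : finType) (P : Om -> R) (E F : pred Om) :
  is_prob P -> (forall w, ~~ E w -> F w) -> 1 - Pr P F <= Pr P E.
Proof.
move=> [P0 P1] H; rewrite /Pr -P1 (bigID E) /=.
suff : \sum_(w | ~~ E w) P w <= \sum_(w | F w) P w by lra.
rewrite (big_mkcond (fun w => ~~ E w)) [X in _ <= X](big_mkcond F).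
apply: ler_sum => w _; case: ifP => hE; last by case: ifP.
by rewrite H.
Qed.

Theorem mainTheorem6
  (R : realType) (V : finType) (Om : finType) (P : Om -> R)
  (sigma : {set V} -> R) (INF_F INF_hat eps' : R) (k th1 : nat)
  (R1 : 'I_th1 -> Om -> rdr R V) (So : {set V}) (delta : R) :
  let n : R := #|V|%:R in
  let Gamma := INF_hat / INF_F in
  (* estimator of the i-th RDR set *)
  let Zhat := fun (i : 'I_th1) (S : {set V}) (w : Om) =>
      INF_hat / n * (if S :&: (R1 i w).1 != set0 then (R1 i w).2 else 0) in
  let Lambda1 := fun (S : {set V}) (w : Om) => INF_hat / n * covW (fun i => R1 i w) S in
  let Sstar := fun w : Om => greedy (fun S => covW (fun i => R1 i w) S) k in
  let a := ln (1 / delta) in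
  is_prob P ->
  mutually_independent P R1 ->
  (0 < th1)%N ->
  0 < INF_F ->
  0 < eps' < 1 ->
  1 - eps' <= Gamma <= 1 + eps' ->
  INF_hat <= n ->
  (forall i S, Expect P (Zhat i S) = Gamma * sigma S / n) ->
  (forall S (lam : R), 0 < lam ->
     Pr P (fun w => \sum_(i < th1) Zhat i S w - th1%:R * (Gamma * sigma S / n) <= - lam)
       <= expR (- (lam ^+ 2) / (4 * th1%:R * (Gamma * sigma S / n) * INF_hat / n))) ->
  (forall w, (1 - (expR 1)^-1) * Lambda1 So w <= Lambda1 (Sstar w) w) ->
  #|So| = k ->
  (forall S : {set V}, #|S| = k -> sigma S <= sigma So) ->
  0 < delta < 1 ->
  Pr P (fun w => sigma So <=
     (Num.sqrt (Lambda1 (Sstar w) w / (1 - (expR 1)^-1) + a) + Num.sqrt a) ^+ 2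
       * (n / (th1%:R * (1 - eps'))))
  >= 1 - delta.
Proof.
move=> n Gamma Zhat Lambda1 Sstar a Hprob _ Hth HF /andP[He0 He1] /andP[HG1 HG2]
  Hn _ Htail Hgr _ _ /andP[Hd0 Hd1].
set s := sigma So.
set th : R := th1%:R.
have th_gt0 : 0 < th by rewrite /th ltr0n.
have G_gt0 : 0 < Gamma by lra.
have INFh_gt0 : 0 < INF_hat.
  have -> : INF_hat = Gamma * INF_F by rewrite /Gamma divfK // gt_eqF.
  exact: mulr_gt0.
have n_gt0 : 0 < n by lra.
have m_gt0 : 0 < th * (1 - eps') by apply: mulr_gt0 => //; lra.
have K_ge0 : 0 <= n / (th * (1 - eps')) by apply: divr_ge0; lra.
have [s_le0 | s_gt0] := lerP s 0.
  apply: (le_trans _ (@Pr_compl _ _ _ _ pred0 Hprob _)).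
    by rewrite /Pr big_pred0 // subr0; lra.
  move=> w /=; rewrite -ltNge => h; move: (lt_le_trans h s_le0).
  rewrite ltNge; case/negP; apply: mulr_ge0 => //; exact: sqr_ge0.
set p := Gamma * s / n.
have p_gt0 : 0 < p by rewrite /p divr_gt0 // mulr_gt0.
have hpn : p * n = Gamma * s by rewrite /p divfK // gt_eqF.
set c := INF_hat / n.
have c_gt0 : 0 < c by rewrite /c divr_gt0.
have c_le1 : c <= 1 by rewrite /c ler_pdivrMr // mul1r.
set D := 4 * th * p * INF_hat / n.
have hD : D = 4 * th * p * c by rewrite /D /c mulrA.
have D_gt0 : 0 < D by rewrite hD; apply: mulr_gt0 => //; apply: mulr_gt0 => //; apply: mulr_gt0.
have D_le : D <= 4 * (th * p).
  have tp : 0 < th * p by apply: mulr_gt0.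
  rewrite hD -(mulrA 4 th p); nra.
have a_gt0 : 0 < a by rewrite /a ln_gt0 // ltr_pdivlMr // mul1r.
set lam := Num.sqrt (a * D).
have lam_gt0 : 0 < lam by rewrite /lam sqrtr_gt0 mulr_gt0.
have lam2 : lam ^+ 2 = a * D by rewrite /lam sqr_sqrtr // mulr_ge0 // ltW.
have HT := Htail So lam lam_gt0.
rewrite -/s -/th -/p -/D lam2 in HT.
have hexp : expR (- (a * D) / D) = delta.
  rewrite mulNr mulfK ?gt_eqF // expRN /a lnK ?div1r ?invrK //.
  by rewrite posrE ?div1r ?invr_gt0 ?divr_gt0.
rewrite hexp in HT.
apply: (le_trans _ (@Pr_compl _ _ _ _ (fun w => \sum_(i < th1) Zhat i So w - th * p <= - lam) Hprob _)).
  lra.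
move=> w /negP hE; apply/negPn/negP => hF; apply: hE.
have hsum : \sum_(i < th1) Zhat i So w = Lambda1 So w.
  by rewrite /Zhat /Lambda1 /covW -mulr_sumr.
rewrite hsum -ltNge in hF.
set Lo := Lambda1 So w in hF.
set Ls := Lambda1 (Sstar w) w.
have e_gt1 : 1 < expR (1 : R) by rewrite expR_gt1.
have u_gt0 : 0 < 1 - (expR (1:R))^-1.
  have ei : (expR (1:R))^-1 < 1 by rewrite invf_lt1 //; lra.
  lra.
set u := 1 - (expR (1:R))^-1 in u_gt0 *.
have hL : Lo <= Ls / u by rewrite ler_pdivlMr // mulrC; exact: Hgr.
set L := Ls / u in hL *.
have x_ge0 : 0 <= Num.sqrt (th * p) := sqrtr_ge0 _.
have x2 : Num.sqrt (th * p) ^+ 2 = th * p by rewrite sqr_sqrtr // mulr_ge0 // ltW.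
set x := Num.sqrt (th * p) in x_ge0 x2.
have r_ge0 : 0 <= Num.sqrt a := sqrtr_ge0 _.
have r2 : Num.sqrt a ^+ 2 = a by rewrite sqr_sqrtr // ltW.
set r := Num.sqrt a in r_ge0 r2 *.
have lam_le : lam <= 2 * r * x.
  have : lam ^+ 2 <= (2 * r * x) ^+ 2.
    rewrite lam2 !exprMn r2 x2; nra.
  move=> h; have lam_ge0 := ltW lam_gt0.
  have t0 : 0 <= 2 * r * x by rewrite mulr_ge0 // mulr_ge0.
  nra.
have La : (x - r) ^+ 2 <= L + a.
  rewrite sqrrB r2 x2; nra.
have La0 : 0 <= L + a by apply: le_trans La; exact: sqr_ge0.
have q_ge0 : 0 <= Num.sqrt (L + a) := sqrtr_ge0 _.
have q2 : Num.sqrt (L + a) ^+ 2 = L + a by rewrite sqr_sqrtr.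
set q := Num.sqrt (L + a) in q_ge0 q2 *.
have xq : x <= q + r by nra.
have tpB : th * p <= (q + r) ^+ 2 by rewrite -x2; nra.
set B := (q + r) ^+ 2 in tpB *.
rewrite mulrA ler_pdivlMr //.
have h1 : s * (th * (1 - eps')) <= th * (p * n).
  rewrite hpn mulrCA ler_pM2l // [X in _ <= X]mulrC ler_pM2l //.
apply: (le_trans h1); rewrite mulrA ler_pM2r //.
Qed.
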